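(* Let $f,g:\mathbb R\to\mathbb R$ be two convex functions. Define $\psi:\mathbb R\to(-\infty,\infty]$ by $\psi=g-(g-f)^c$. Then $\psi$ is convex.
   Context: For $h:\mathbb R\to(-\infty,\infty)$, $h^c$ denotes the largest convex function lying below $h$ (the convex hull). It may be identically $-\infty$; a function identically equal to $-\infty$ or $+\infty$ is deemed convex. *)

(* Defs.v *)
From HB Require Import structures.
From mathcomp Require Import all_boot all_order all_algebra.
From mathcomp Require Import all_classical all_reals.
From mathcomp Require Import ereal.
Set Implicit Arguments. Unset Strict Implicit. Unset Printing Implicit Defensive.
Import Order.TTheory GRing.Theory Num.Theory.
Local Open Scope ring_scope.
Local Open Scope classical_set_scope.

Definition convex_fun (R : realType) (f : R -> R) : Prop :=
  forall (x y t : R), 0 <= t -> t <= 1 ->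
    f (t * x + (1 - t) * y) <= t * f x + (1 - t) * f y.

(* Convexity of an extended-real-valued function R -> \bar R, via convexity
   of the epigraph (the standard definition; the constant functions -oo and
   +oo are convex). *)
Definition econvex_fun (R : realType) (k : R -> \bar R) : Prop :=
  forall (x y t a b : R), 0 <= t -> t <= 1 ->
    (k x <= a%:E)%E -> (k y <= b%:E)%E ->
    (k (t * x + (1 - t) * y)%R <= (t * a + (1 - t) * b)%R%:E)%E.

Definition conv_hull (R : realType) (h : R -> R) : R -> \bar R :=
  fun x => ereal_sup [set k x | k in
    [set k : R -> \bar R | econvex_fun k /\ (forall y, (k y <= (h y)%:E)%E)]].

(* Main.v *)
Require Import Defs.
From HB Require Import structures.
From mathcomp Require Import all_boot all_order all_algebra.
From mathcomp Require Import all_classical all_reals.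
From mathcomp Require Import ereal.
From mathcomp Require Import ring lra.
Import Order.TTheory GRing.Theory Num.Theory.

Section Aux.
Local Open Scope ring_scope.
Context {R : realType}.

Lemma chordE (k : R -> \bar R) : econvex_fun k ->
  forall {u w v m c : R}, u <= w -> w <= v -> (k u <= (m*u+c)%:E)%E ->
  (k v <= (m*v+c)%:E)%E -> (k w <= (m*w+c)%:E)%E.
Proof.
move=> hk u w v m c uw wv hu hv.
have [uv|uv] := eqVneq u v.
  subst v; have -> : w = u by apply/eqP; rewrite eq_le uw wv.
  exact: hu.
have vu0 : v - u != 0 by rewrite subr_eq0 eq_sym.
have ltuv : u < v by rewrite lt_neqAle uv (le_trans uw wv).
have vupos : 0 < v - u by rewrite subr_gt0.
set t := (v - w) / (v - u).
have t0 : 0 <= t by rewrite /t; apply: divr_ge0; rewrite ?subr_ge0 // ltW.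
have t1e : 1 - t = (w - u) / (v - u) by rewrite /t; field.
have t1 : t <= 1.
  have : 0 <= 1 - t by rewrite t1e; apply: divr_ge0; rewrite ?subr_ge0 // ltW.
  lra.
have -> : w = t*u + (1-t)*v by rewrite t1e /t; field.
have -> : m*(t*u+(1-t)*v)+c = t*(m*u+c) + (1-t)*(m*v+c) by ring.
exact: hk.
Qed.

Lemma chord_econv (k : R -> \bar R) :
  (forall u w v m c : R, u <= w -> w <= v -> (k u <= (m*u+c)%:E)%E ->
  (k v <= (m*v+c)%:E)%E -> (k w <= (m*w+c)%:E)%E) -> econvex_fun k.
Proof.
move=> hc x y t a b t0 t1 hx hy.
have [xy|xy] := eqVneq x y.
  subst y; have -> : t*x+(1-t)*x = x by ring.
  case: (leP a b) => ab.
    apply: le_trans hx _; rewrite lee_fin; nra.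
  apply: le_trans hy _; rewrite lee_fin; nra.
have xy0 : x - y != 0 by rewrite subr_eq0.
set m := (a-b)/(x-y); set c := a - m*x.
have ha : m*x + c = a by rewrite /c; ring.
have hb : m*y + c = b by rewrite /c /m; field.
have hw : m*(t*x+(1-t)*y)+c = t*a+(1-t)*b by rewrite -ha -hb; ring.
rewrite -hw.
case: (leP x y) => lexy.
  by apply: (hc x _ y); rewrite ?ha ?hb //; nra.
by apply: (hc y _ x); rewrite ?ha ?hb //; nra.
Qed.

Lemma chordR (G : R -> R) : convex_fun G ->
  forall {u w v m c : R}, u <= w -> w <= v -> G u <= m*u+c ->
  G v <= m*v+c -> G w <= m*w+c.
Proof.
move=> cG u w v m c uw wv hu hv.
rewrite -lee_fin; apply: (@chordE (fun r => (G r)%:E)) uw wv _ _;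
  rewrite ?lee_fin //.
move=> x y t a b t0 t1; rewrite !lee_fin => hx hy.
apply: le_trans (cG x y t t0 t1) _; nra.
Qed.

Lemma econvEF (G : R -> R) : convex_fun G -> econvex_fun (fun r => (G r)%:E).
Proof.
move=> cG x y t a b t0 t1; rewrite !lee_fin => hx hy.
apply: le_trans (cG x y t t0 t1) _; nra.
Qed.

Lemma sub_le1 (gv lv B : R) (e : \bar R) : (e <= B%:E)%E ->
  ((gv%:E - e <= lv%:E)%E) -> ((gv - lv)%:E <= e)%E.
Proof.
case: e => [r| |] //= _; rewrite ?lee_fin; lra.
Qed.

Lemma sub_le2 (gv lv B : R) (e : \bar R) : (e <= B%:E)%E ->
  ((gv - lv)%:E <= e)%E -> ((gv%:E - e <= lv%:E)%E).
Proof.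
case: e => [r| |] //= _; rewrite ?lee_fin; lra.
Qed.

End Aux.
Arguments chordE {R k} _ {u w v m c}.
Arguments chordR {R G} _ {u w v m c}.

Local Open Scope ring_scope.

Theorem lemma2p2 (R : realType) (f g : R -> R) :
  convex_fun f -> convex_fun g ->
  econvex_fun (fun x : R => ((g x)%:E - conv_hull (fun y => (g y - f y)%R) x)%E).
Proof.
move=> cf cg.
set h := (fun y => g y - f y).
set H := conv_hull h.
have Hh : forall r, (H r <= (h r)%:E)%E.
  move=> r; apply: ge_ereal_sup => _ [k [_ kh] <-]; exact: kh.
have kH : forall k, econvex_fun k -> (forall y, (k y <= (h y)%:E)%E) ->
    forall r, (k r <= H r)%E.
  move=> k ck kh r; apply: ereal_sup_ubound; by exists k.
have cH : econvex_fun H.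
  move=> x y t a b t0 t1 hx hy; apply: ge_ereal_sup => _ [k [ck kh] <-].
  apply: (ck) => //.
    exact: le_trans (kH k ck kh _) hx.
  exact: le_trans (kH k ck kh _) hy.
apply: chord_econv => x z y m c xz zy hx hy.
set G := fun r => g r - (m*r+c).
have cG : convex_fun G.
  move=> u v t t0 t1; have := cg u v t t0 t1; rewrite /G; nra.
have GxH : ((G x)%:E <= H x)%E by exact: (@sub_le1 _ (g x) (m*x+c) _ _ (Hh x) hx).
have GyH : ((G y)%:E <= H y)%E by exact: (@sub_le1 _ (g y) (m*y+c) _ _ (Hh y) hy).
have fx : f x <= m*x+c.
  have := le_trans GxH (Hh x); rewrite lee_fin /G /h; lra.
have fy : f y <= m*y+c.
  have := le_trans GyH (Hh y); rewrite lee_fin /G /h; lra.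
set k := fun r => if (x <= r <= y) then Order.max (H r) (G r)%:E else H r.
have kh : forall r, (k r <= (h r)%:E)%E.
  move=> r; rewrite /k; case: ifP => hr; last exact: Hh.
  rewrite ge_max Hh /= lee_fin.
  move/andP: hr => [xr ry].
  have := chordR cf xr ry fx fy; rewrite /G /h; lra.
have Hk : forall r, (H r <= k r)%E.
  by move=> r; rewrite /k; case: ifP => // _; rewrite le_max lexx.
have ck : econvex_fun k.
  apply: chord_econv => u w v m' c' uw wv hu hv.
  have hHw := chordE cH uw wv (le_trans (Hk u) hu) (le_trans (Hk v) hv).
  rewrite /k; case: ifP => hw; last exact: hHw.
  move/andP: hw => [xw wy].
  rewrite ge_max hHw /=.
  have eG := econvEF G cG.
  have [p [pw Gp]] : exists p, p <= w /\ ((G p)%:E <= (m' * p + c')%:E)%E.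
    case: (leP x u) => xu.
      exists u; split => //.
      by move: hu; rewrite /k xu (le_trans uw wy) /= ge_max => /andP[_].
    exists x; split => //.
    apply: le_trans GxH _.
    apply: (chordE cH (ltW xu) (le_trans xw wv)).
      exact: le_trans (Hk u) hu.
    exact: le_trans (Hk v) hv.
  have [q [wq Gq]] : exists q, w <= q /\ ((G q)%:E <= (m' * q + c')%:E)%E.
    case: (leP v y) => vy.
      exists v; split => //.
      by move: hv; rewrite /k vy (le_trans xw wv) /= ge_max => /andP[_].
    exists y; split => //.
    apply: le_trans GyH _.
    apply: (chordE cH (le_trans uw wy) (ltW vy)).
      exact: le_trans (Hk u) hu.
    exact: le_trans (Hk v) hv.
  exact: (chordE eG pw wq Gp Gq).
have Gz : ((G z)%:E <= H z)%E.
  apply: le_trans (kH k ck kh z).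
  by rewrite /k xz zy /= le_max lexx orbT.
exact: (@sub_le2 _ (g z) (m*z+c) _ _ (Hh z) Gz).
Qed.
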